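(* Let $\mathbb{F}$ be a field of characteristic not $2$, let $V$ be a $2$-dimensional $\mathbb{F}$-space with basis $u,v$ and symmetric bilinear form $B$ with $B(u,u)=B(v,v)=1$, $B(u,v)=\delta$, and let $\mathfrak{S}(\delta)=\mathbb{F}\oplus V$ with product $(\alpha+x)(\beta+y)=(\alpha\beta+B(x,y))+(\alpha y+\beta x)$. Put $a=\frac12(1+u)$ and $b=\frac12(1+v)$. Then: (a) $a$ and $b$ generate $\mathfrak{S}(\delta)$ if and only if $\delta\neq 1$; in this case $\mathfrak{S}(\delta)\cong\mathfrak{J}(\frac12(1+\delta))$ via an isomorphism sending the generators $\mathfrak{a},\mathfrak{b}$ of $\mathfrak{J}$ to $a,b$; (b) if $\delta=1$ then $\langle\langle a,b\rangle\rangle=\mathrm{span}\{a,b\}$ is a $2$-dimensional subalgebra isomorphic to $\mathfrak{J}(1)/\langle\sigma\rangle$ via an isomorphism sending the images of $\mathfrak{a},\mathfrak{b}$ to $a,b$.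
   Context: For $\alpha\in\mathbb{F}$, $\mathfrak{J}(\alpha)$ is the commutative algebra with basis $\mathfrak{a},\mathfrak{b},\sigma$ and product $\mathfrak{a}^2=\mathfrak{a}$, $\mathfrak{b}^2=\mathfrak{b}$, $\mathfrak{a}\mathfrak{b}=\frac12\mathfrak{a}+\frac12\mathfrak{b}+\sigma$, $\mathfrak{a}\sigma=\frac{\alpha-1}{2}\mathfrak{a}$, $\mathfrak{b}\sigma=\frac{\alpha-1}{2}\mathfrak{b}$, $\sigma^2=\frac{\alpha-1}{2}\sigma$. In $\mathfrak{J}(1)$, $\langle\sigma\rangle$ is an ideal (it annihilates the algebra). $\langle\langle a,b\rangle\rangle$ denotes the subalgebra generated by $a,b$. *)

(* Defs.v *)
From HB Require Import structures.
From mathcomp Require Import all_boot all_order all_algebra.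
Set Implicit Arguments. Unset Strict Implicit. Unset Printing Implicit Defensive.
Import Order.TTheory GRing.Theory Num.Theory.
Local Open Scope ring_scope.

Section Defs.
Variable F : fieldType.

Definition i0 : 'I_3 := inord 0.
Definition i1 : 'I_3 := inord 1.
Definition i2 : 'I_3 := inord 2.

Definition mk3 (p q r : F) : 'rV[F]_3 := \row_(i < 3) [:: p; q; r]`_i.

(* S(delta) = F (+) V, coordinates (alpha, x1, x2) w.r.t. 1, u, v.
   B(x,y) = x1 y1 + delta (x1 y2 + x2 y1) + x2 y2. *)
Definition Bform (delta x1 x2 y1 y2 : F) : F :=
  x1 * y1 + delta * (x1 * y2 + x2 * y1) + x2 * y2.

Definition Smul (delta : F) (x y : 'rV[F]_3) : 'rV[F]_3 :=
  mk3 (x 0 i0 * y 0 i0 + Bform delta (x 0 i1) (x 0 i2) (y 0 i1) (y 0 i2))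
      (x 0 i0 * y 0 i1 + y 0 i0 * x 0 i1)
      (x 0 i0 * y 0 i2 + y 0 i0 * x 0 i2).

Definition S1 : 'rV[F]_3 := mk3 1 0 0.
Definition Su : 'rV[F]_3 := mk3 0 1 0.
Definition Sv : 'rV[F]_3 := mk3 0 0 1.
Definition Sa : 'rV[F]_3 := 2^-1 *: (S1 + Su).
Definition Sb : 'rV[F]_3 := 2^-1 *: (S1 + Sv).

(* J(alpha), coordinates w.r.t. the basis frak a, frak b, sigma; product is the
   bilinear extension of the multiplication table. *)
Definition Jmul (alpha : F) (x y : 'rV[F]_3) : 'rV[F]_3 :=
  let c := (alpha - 1) / 2 in
  let p := x 0 i0 in let q := x 0 i1 in let r := x 0 i2 in
  let p' := y 0 i0 in let q' := y 0 i1 in let r' := y 0 i2 in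
  let m := p * q' + q * p' in
  (p * p') *: mk3 1 0 0 + (q * q') *: mk3 0 1 0
  + m *: mk3 2^-1 2^-1 1
  + (p * r' + r * p') *: (c *: mk3 1 0 0)
  + (q * r' + r * q') *: (c *: mk3 0 1 0)
  + (r * r') *: (c *: mk3 0 0 1).

Definition Ja : 'rV[F]_3 := mk3 1 0 0.
Definition Jb : 'rV[F]_3 := mk3 0 1 0.
Definition Jsigma : 'rV[F]_3 := mk3 0 0 1.

Definition is_subalg (mul : 'rV[F]_3 -> 'rV[F]_3 -> 'rV[F]_3)
  (P : 'rV[F]_3 -> Prop) : Prop :=
  [/\ P 0, (forall k x y, P x -> P y -> P (k *: x + y))
    & (forall x y, P x -> P y -> P (mul x y))].

Definition gen2 (mul : 'rV[F]_3 -> 'rV[F]_3 -> 'rV[F]_3) (a b x : 'rV[F]_3) : Prop :=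
  forall P, is_subalg mul P -> P a -> P b -> P x.

Definition span2 (a b x : 'rV[F]_3) : Prop := exists s t : F, x = s *: a + t *: b.

Definition lin3 (f : 'rV[F]_3 -> 'rV[F]_3) : Prop :=
  forall k x y, f (k *: x + y) = k *: f x + f y.

Definition alg_hom (mul1 mul2 : 'rV[F]_3 -> 'rV[F]_3 -> 'rV[F]_3)
  (f : 'rV[F]_3 -> 'rV[F]_3) : Prop :=
  lin3 f /\ forall x y, f (mul1 x y) = mul2 (f x) (f y).

End Defs.

(* Main.v *)
Require Import Defs.
From HB Require Import structures.
From mathcomp Require Import all_boot all_order all_algebra.
From mathcomp Require Import ring.
Import GRing.Theory.
Local Open Scope ring_scope.

Section H.
Variable F : fieldType.
Lemma mk30 (p q r : F) : mk3 p q r 0 i0 = p.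
Proof. by rewrite /mk3 mxE /i0 inordK. Qed.
Lemma mk31 (p q r : F) : mk3 p q r 0 i1 = q.
Proof. by rewrite /mk3 mxE /i1 inordK. Qed.
Lemma mk32 (p q r : F) : mk3 p q r 0 i2 = r.
Proof. by rewrite /mk3 mxE /i2 inordK. Qed.
Lemma entD (x y : 'rV[F]_3) j : (x + y) 0 j = x 0 j + y 0 j.
Proof. by rewrite mxE. Qed.
Lemma entZ k (x : 'rV[F]_3) j : (k *: x) 0 j = k * x 0 j.
Proof. by rewrite mxE. Qed.
Lemma ent0 j : (0 : 'rV[F]_3) 0 j = 0.
Proof. by rewrite mxE. Qed.
Lemma eq3 (x y : 'rV[F]_3) : x 0 i0 = y 0 i0 -> x 0 i1 = y 0 i1 ->
  x 0 i2 = y 0 i2 -> x = y.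
Proof.
move=> h0 h1 h2; apply/rowP => j;
case: j => [[|[|[|n]]] Hj].
- by have -> : Ordinal Hj = i0 by apply/val_inj; rewrite /= inordK.
- by have -> : Ordinal Hj = i1 by apply/val_inj; rewrite /= inordK.
- by have -> : Ordinal Hj = i2 by apply/val_inj; rewrite /= inordK.
- by [].
Qed.
End H.
Definition fmap {F : fieldType} (d : F) (x : 'rV[F]_3) : 'rV[F]_3 :=
  x 0 i0 *: Sa F + x 0 i1 *: Sb F + (x 0 i2 * (d - 1) / 4%:R) *: S1 F.
Ltac ents := rewrite ?(entD, entZ, ent0, mk30, mk31, mk32).
Ltac unf := rewrite /fmap /Sa /Sb /S1 /Su /Sv /Ja /Jb /Jsigma /Smul /Bform.
Section H2.
Variable F : fieldType.


Lemma fmap_hom (hF : (2%:R : F) != 0) (d alpha : F) : alpha = 2^-1 * (1 + d) ->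
  forall x y, fmap d (Jmul alpha x y) = Smul d (fmap d x) (fmap d y).
Proof.
move=> -> x y; rewrite /fmap /Jmul /Smul /Sa /Sb /S1 /Su /Sv /Bform.
have h4 : (4%:R : F) != 0 by rewrite (_ : 4 = 2 * 2)%N // natrM mulf_neq0.
apply: eq3; ents; field; rewrite ?hF ?h4 //.
Qed.

Lemma fmap_lin (d : F) : lin3 (fmap d).
Proof.
move=> k x y; rewrite /fmap; apply: eq3; ents; ring.
Qed.

Lemma comb3 mul (P : 'rV[F]_3 -> Prop) u v w k1 k2 k3 :
  is_subalg mul P -> P u -> P v -> P w -> P (k1 *: u + k2 *: v + k3 *: w).
Proof.
rewrite /is_subalg; case=> P0 Pl Pm Pu Pv Pw.
rewrite -addrA -[k3 *: w]addr0; by apply: (Pl) => //; apply: (Pl) => //; apply: (Pl).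
Qed.

Lemma span2_sub (hF : (2%:R : F) != 0) : is_subalg (Smul 1) (span2 (Sa F) (Sb F)).
Proof.
split.
- by exists 0, 0; rewrite !scale0r addr0.
- move=> k x y [s [t ->]] [s' [t' ->]]; exists (k * s + s'), (k * t + t').
  unf; apply: eq3; ents; ring.
- move=> x y [s [t ->]] [s' [t' ->]].
  exists (s * s' + (s * t' + t * s') / 2%:R), (t * t' + (s * t' + t * s') / 2%:R).
  unf; apply: eq3; ents; field; rewrite ?hF //.
Qed.

Lemma span2_S1 (hF : (2%:R : F) != 0) : ~ span2 (Sa F) (Sb F) (S1 F).
Proof.
case=> s [t H].
have hs : s = 2%:R * (s *: Sa F + t *: Sb F) 0 i1 by unf; ents; field.
have ht : t = 2%:R * (s *: Sa F + t *: Sb F) 0 i2 by unf; ents; field.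
rewrite -H /S1 mk31 mulr0 in hs; rewrite -H /S1 mk32 mulr0 in ht.
rewrite hs ht !scale0r addr0 in H.
have := congr1 (fun m : 'rV[F]_3 => m 0 i0) H; rewrite /= /S1 mk30 ent0 => /eqP.
by rewrite oner_eq0.
Qed.
End H2.

Theorem proposition3p4 (F : fieldType) (delta : F) (hF : (2%:R : F) != 0) :
  ((forall x, gen2 (Smul delta) (Sa F) (Sb F) x) <-> delta != 1)
  /\ (delta != 1 ->
      exists f : 'rV[F]_3 -> 'rV[F]_3,
        [/\ alg_hom (Jmul (2^-1 * (1 + delta))) (Smul delta) f, bijective f,
            f (Ja F) = Sa F & f (Jb F) = Sb F])
  /\ (delta = 1 ->
      [/\ (forall x, gen2 (Smul delta) (Sa F) (Sb F) x <-> span2 (Sa F) (Sb F) x),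
          (forall s t : F, s *: Sa F + t *: Sb F = 0 -> s = 0 /\ t = 0)
        & exists phi : 'rV[F]_3 -> 'rV[F]_3,
            [/\ alg_hom (Jmul 1) (Smul delta) phi,
                (forall x, phi x = 0 <-> exists k : F, x = k *: Jsigma F),
                (forall y, span2 (Sa F) (Sb F) y <-> exists x, phi x = y),
                phi (Ja F) = Sa F & phi (Jb F) = Sb F]]).
Proof.
have h4 : (4%:R : F) != 0 by rewrite (_ : 4 = 2 * 2)%N // natrM mulf_neq0.
split; [|split].
- split.
  + move=> H; apply/eqP => hd; subst delta.
    apply: (@span2_S1 F hF); apply: H; [exact: span2_sub | by exists 1, 0; rewrite scale1r scale0r addr0
      | by exists 0, 1; rewrite scale1r scale0r add0r].
  + move=> hd x P HP Pa Pb.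
    have hd1 : delta - 1 != 0 by rewrite subr_eq0.
    have PS1 : P (S1 F).
      have -> : S1 F = (4%:R / (delta - 1)) *: Smul delta (Sa F) (Sb F)
          + (- 2%:R / (delta - 1)) *: Sa F + (- 2%:R / (delta - 1)) *: Sb F.
        by unf; apply: eq3; ents; field; rewrite ?hF ?hd1 ?h4 //.
      have PM : P (Smul delta (Sa F) (Sb F)) by case: HP => _ _ Pm; exact: Pm.
      exact: (@comb3 F _ P _ _ _ _ _ _ HP).
    have -> : x = (2%:R * x 0 i1) *: Sa F + (2%:R * x 0 i2) *: Sb F
        + (x 0 i0 - x 0 i1 - x 0 i2) *: S1 F.
      by unf; apply: eq3; ents; field; rewrite ?hF.
    exact: (@comb3 F _ P _ _ _ _ _ _ HP).
- move=> hd; have hd1 : delta - 1 != 0 by rewrite subr_eq0.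
  exists (fmap delta); split.
  + split; [exact: fmap_lin | exact: fmap_hom].
  + exists (fun y : 'rV[F]_3 => mk3 (2%:R * y 0 i1) (2%:R * y 0 i2)
                                   ((y 0 i0 - y 0 i1 - y 0 i2) * 4%:R / (delta - 1))).
    * move=> x; unf; apply: eq3; ents; field; rewrite ?hF ?hd1 ?h4 //.
    * move=> x; unf; apply: eq3; ents; field; rewrite ?hF ?hd1 ?h4 //.
  + unf; apply: eq3; ents; ring.
  + unf; apply: eq3; ents; ring.
- move=> hd; subst delta; split.
  + move=> x; split.
    * move=> H; apply: H; [exact: span2_sub | by exists 1, 0; rewrite scale1r scale0r addr0
      | by exists 0, 1; rewrite scale1r scale0r add0r].
    * case=> s [t ->] P [P0 Pl Pm] Pa Pb.
      rewrite -[t *: _]addr0; apply: (Pl) => //; exact: (Pl).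
  + move=> s t H.
    have hs : s = 2%:R * (s *: Sa F + t *: Sb F) 0 i1 by unf; ents; field; rewrite ?hF ?h4 //.
    have ht : t = 2%:R * (s *: Sa F + t *: Sb F) 0 i2 by unf; ents; field; rewrite ?hF ?h4 //.
    rewrite H ent0 mulr0 in hs; rewrite H ent0 mulr0 in ht; by split.
  + exists (fmap 1); split.
    * have e1 : (1 : F) = 2^-1 * (1 + 1) by field.
      split; [exact: fmap_lin | exact: (@fmap_hom F hF 1 1 e1)].
    * move=> x; split.
      -- move=> H.
         have h0 : x 0 i0 = 2%:R * fmap 1 x 0 i1 by unf; ents; field; rewrite ?hF ?h4 //.
         have h1 : x 0 i1 = 2%:R * fmap 1 x 0 i2 by unf; ents; field; rewrite ?hF ?h4 //.
         rewrite H ent0 mulr0 in h0; rewrite H ent0 mulr0 in h1.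
         exists (x 0 i2); unf; apply: eq3; ents; rewrite ?h0 ?h1; ring.
      -- case=> k ->; unf; apply: eq3; ents; ring.
    * move=> y; split.
      -- case=> s [t ->]; exists (mk3 s t 0); unf; apply: eq3; ents; ring.
      -- case=> x <-; exists (x 0 i0), (x 0 i1); unf; apply: eq3; ents; ring.
    * unf; apply: eq3; ents; ring.
    * unf; apply: eq3; ents; ring.
Qed.
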